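(* Let $D\subseteq[n]\times[n]$ be a diagram. Fix any diagram $C^{(1)}\le D$ and set $\bm{m}=\prod_{j=1}^n\prod_{i\in C^{(1)}_j}x_i$. Let $C^{(1)},\dots,C^{(r)}$ be all the diagrams $C$ with $C\le D$ and $\prod_{j=1}^n\prod_{i\in C_j}x_i=\bm{m}$. Then the coefficient of $\bm{m}$ in $\chi_D$ equals $$\dim\Big(\mathrm{Span}_{\mathbb{C}}\Big\{\prod_{j=1}^n\det\big(Y^{C^{(i)}_j}_{D_j}\big)\ :\ i\in[r]\Big\}\Big).$$
   Context: A diagram $D\subseteq[n]\times[n]$ is a set of boxes $(i,j)$ (row $i$, column $j$), identified with its column sequence $(D_1,\dots,D_n)$, $D_j=\{i:(i,j)\in D\}$. For $R,S\subseteq[n]$, $R\le S$ means $\#R=\#S$ and the $k$-th smallest element of $R$ is at most the $k$-th smallest element of $S$ for each $k$; for diagrams, $C\le D$ means $C_j\le D_j$ for all $j$. Let $Y$ be the $n\times n$ upper-triangular matrix with indeterminates $y_{ij}$ ($i\le j$) and zeros below the diagonal, and $Y^R_S$ its submatrix with rows $R$ and columns $S$ (determinant of the empty matrix is $1$). Let $B$ be the group of invertible upper-triangular complex $n\times n$ matrices acting on $\mathbb{C}[Y]$ by $(f\cdot b)(Y)=f(b^{-1}Y)$. The flagged Weyl module is $\mathcal{M}_D=\mathrm{Span}_{\mathbb{C}}\{\prod_{j=1}^n\det(Y^{C_j}_{D_j}): C\le D\}$, a $B$-module. For a $B$-module $N$, $\mathrm{char}(N)(x_1,\dots,x_n)$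 is the trace of $\mathrm{diag}(x_1,\dots,x_n)$ acting on $N$, and the dual character is $\mathrm{char}^*(N)(x_1,\dots,x_n)=\mathrm{char}(N)(x_1^{-1},\dots,x_n^{-1})$. Set $\chi_D=\mathrm{char}^*\mathcal{M}_D$. *)

(* Defs.v *)
From mathcomp Require Import all_boot all_algebra.
From mathcomp Require Import complex.
From mathcomp Require Import Rstruct.
From mathcomp Require Import mpoly.

Set Implicit Arguments.
Unset Strict Implicit.
Unset Printing Implicit Defensive.

Import GRing.Theory.
Local Open Scope ring_scope.

Definition CC : fieldType := (Rdefinitions.R)[i].

Section LinAlg.
Variables (K : fieldType) (V : lmodType K).

Definition span_of (s : seq V) (f : V) : Prop :=
  exists c : 'I_(size s) -> K, f = \sum_(i < size s) c i *: s`_i.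

Definition lin_indep (b : seq V) : Prop :=
  forall c : 'I_(size b) -> K,
    \sum_(i < size b) c i *: b`_i = 0 -> forall i, c i = 0.

Definition is_basis (W : V -> Prop) (b : seq V) : Prop :=
  lin_indep b /\ forall f, W f <-> span_of b f.

Definition has_dim (W : V -> Prop) (d : nat) : Prop :=
  exists b, size b = d /\ is_basis W b.

Definition has_trace (W : V -> Prop) (L : V -> V) (tr : K) : Prop :=
  exists b, is_basis W b /\
    exists A : 'M[K]_(size b),
      (forall k : 'I_(size b), L b`_k = \sum_(l < size b) A k l *: b`_l)
      /\ tr = \tr A.
End LinAlg.

(* A diagram D in [n]x[n], given by its column sequence j |-> D_j.
   (Indices 0..n-1 stand for 1..n.) *)
Definition diagram (n : nat) := {ffun 'I_n -> {set 'I_n}}.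

(* The elements of R in increasing order (enum of a finset of 'I_n is
   increasing since it follows the enumeration 0,1,...,n-1). *)
Definition svals n (R : {set 'I_n}) : seq nat := [seq val i | i <- enum R].

Definition leset n (R S : {set 'I_n}) : bool :=
  (#|R| == #|S|) &&
  [forall k : 'I_#|R|, nth 0%N (svals R) k <= nth 0%N (svals S) k]%N.

Definition lediag n (C D : diagram n) : bool := [forall j, leset (C j) (D j)].

(* C[Y]: polynomials in the variables y_ij, indexed by (i,j) via
   mxvec_index i j : 'I_(n*n).  Only the y_ij with i <= j occur in Y. *)
Notation polyY n := {mpoly CC[n * n]}.

Definition Ymx (n : nat) : 'M[polyY n]_n :=
  \matrix_(i, j) (if (i <= j)%N then 'X_(mxvec_index i j) else 0).

(* det (Y^R_S): rows R and columns S (both listed increasingly); only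
   used when #|R| = #|S|.  The determinant of the 0x0 matrix is 1. *)
Definition minorY n (R S : {set 'I_n}) : polyY n :=
  \det (\matrix_(k < #|S|, l < #|S|)
          Ymx n (nth (@enum_val _ (mem S) l) (enum R) k) (@enum_val _ (mem S) l)).

Definition genY n (C D : diagram n) : polyY n :=
  \prod_(j < n) minorY (C j) (D j).

Definition diagrams_le n (D : diagram n) : seq (diagram n) :=
  [seq C <- enum [set: diagram n] | lediag C D].

Definition weylM n (D : diagram n) : polyY n -> Prop :=
  span_of [seq genY C D | C <- diagrams_le D].

Definition actB n (b : 'M[CC]_n) (f : polyY n) : polyY n :=
  let Z := map_mx (fun c : CC => c%:MP) (invmx b) *m Ymx n in
  f \mPo [tuple (mxvec Z) 0 v | v < n * n].

(* P (a polynomial in x_1..x_n) is the dual character of the B-module N: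
   for all x in (C^x)^n (all x_i nonzero),  P(x) = char(N)(x^{-1}) = trace of diag(x^{-1})
   acting on N. *)
Definition is_dual_char n (N : polyY n -> Prop) (P : {mpoly CC[n]}) : Prop :=
  forall x : 'I_n -> CC, (forall i, x i != 0) ->
    has_trace N (actB (diag_mx (\row_i (x i)^-1))) P.@[x].

Definition monoC n (C : diagram n) : {mpoly CC[n]} :=
  \prod_(j < n) \prod_(i in C j) 'X_i.

(* Coefficient of the monomial m (= 'X_[e], whose exponent e = mlead m)
   in P. *)
Definition coef_mon n (P m : {mpoly CC[n]}) : CC := P@_(mlead m).

(* Main.v *)
Require Import Defs.
From mathcomp Require Import all_boot all_algebra.
From mathcomp Require Import complex.
From mathcomp Require Import Rstruct.
From mathcomp Require Import mpoly.
From Stdlib Require Import ClassicalEpsilon.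
From mathcomp Require Import ring.
Import GRing.Theory Num.Theory.
Local Open Scope ring_scope.

Section LA.
Set Implicit Arguments.
Variables (K : fieldType) (V : lmodType K).
Implicit Types (s t : seq V).

Lemma span0 s : span_of s 0.
Proof. by exists (fun _ => 0); rewrite big1 // => i _; rewrite scale0r. Qed.

Lemma spanD s u v : span_of s u -> span_of s v -> span_of s (u + v).
Proof.
move=> [c1 ->] [c2 ->]; exists (fun i => c1 i + c2 i).
by rewrite -big_split; apply: eq_bigr => i _; rewrite scalerDl.
Qed.

Lemma spanZ s a u : span_of s u -> span_of s (a *: u).
Proof.
move=> [c ->]; exists (fun i => a * c i).
by rewrite scaler_sumr; apply: eq_bigr => i _; rewrite scalerA.
Qed.

Lemma span_sum s (I : Type) (r : seq I) (P : pred I) (F : I -> V) :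
  (forall i, P i -> span_of s (F i)) -> span_of s (\sum_(i <- r | P i) F i).
Proof. move=> h; apply: (big_ind (span_of s)) => //; [exact: span0|exact: spanD]. Qed.

Lemma onehot s (i : 'I_(size s)) :
  s`_i = \sum_(j < size s) ((i == j)%:R : K) *: s`_j.
Proof.
rewrite (bigD1 i) //= eqxx scale1r big1 ?addr0 // => j /negbTE.
by rewrite eq_sym => ->; rewrite scale0r.
Qed.

Lemma span_mem s x : x \in s -> span_of s x.
Proof.
move=> hx; have hi : (index x s < size s)%N by rewrite index_mem.
exists (fun j => ((Ordinal hi == j)%:R : K)).
by rewrite -onehot /= nth_index.
Qed.

Lemma span_trans s t f : (forall y, y \in s -> span_of t y) -> span_of s f -> span_of t f.
Proof.
move=> h [c ->]; apply: span_sum => i _; apply: spanZ; apply: h; exact: mem_nth.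
Qed.

Lemma span_sub s t f : {subset s <= t} -> span_of s f -> span_of t f.
Proof. by move=> h; apply: span_trans => y /h; apply: span_mem. Qed.

Lemma indep_nil : lin_indep ([::] : seq V).
Proof. by move=> c _ []. Qed.

Lemma indep_cons x s : lin_indep (x :: s) <-> ~ span_of s x /\ lin_indep s.
Proof.
split.
  move=> hi; split.
    move=> [c hx].
    pose c' (j : 'I_(size s).+1) := if unlift ord0 j is Some i then c i else -1.
    have := hi c'; rewrite /= big_ord_recl /= /c' unlift_none.
    have -> : \sum_(i < size s) (if unlift ord0 (lift ord0 i) is Some i0 then c i0 else -1) *:
       (x :: s)`_(lift ord0 i) = x.
      by rewrite hx; apply: eq_bigr => i _; rewrite liftK.
    rewrite scaleN1r addNr => /(_ erefl ord0).
    by rewrite unlift_none => /eqP; rewrite oppr_eq0 oner_eq0.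
  move=> c hc.
  pose c' (j : 'I_(size s).+1) := if unlift ord0 j is Some i then c i else 0.
  have := hi c'; rewrite /= big_ord_recl /= /c' unlift_none scale0r add0r.
  have -> : \sum_(i < size s) (if unlift ord0 (lift ord0 i) is Some i0 then c i0 else 0) *:
       (x :: s)`_(lift ord0 i) = 0.
    by apply: (etrans _ hc); apply: eq_bigr => i _; rewrite liftK.
  move=> /(_ erefl) h i; have := h (lift ord0 i); by rewrite liftK.
move=> [hx hs] c /=; rewrite big_ord_recl /=.
have E : forall i : 'I_(size s), (x :: s)`_(lift ord0 i) = s`_i by [].
under eq_bigr do rewrite add0n.
move=> h.
have c0 : c ord0 = 0.
  apply/eqP; apply/negP => /negP nz; apply: hx.
  have -> : x = - (c ord0)^-1 *: \sum_(i < size s) c (lift ord0 i) *: s`_i.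
    move/eqP: h; rewrite addr_eq0 => /eqP h.
    by apply: (scalerI nz); rewrite h scalerA mulrN mulfV // scaleN1r.
  apply: spanZ; apply: span_sum => i _; apply: spanZ; apply: span_mem; exact: mem_nth.
move: h; rewrite c0 scale0r add0r => /hs h j.
by case: (unliftP ord0 j) => [i ->|->] //; apply: h.
Qed.

Lemma indep_subseq s1 s2 : subseq s1 s2 -> lin_indep s2 -> lin_indep s1.
Proof.
elim: s2 s1 => [|y s2 IH] s1.
  by rewrite subseq0 => /eqP ->.
case: s1 => [_ _|z s1]; first exact: indep_nil.
rewrite /=; case: eqP => [-> h|_ h] /indep_cons [ny i2].
  apply/indep_cons; split; last exact: IH.
  by move=> hy; apply: ny; apply: span_sub hy; apply: mem_subseq.
exact: IH.
Qed.

Lemma extract (A : eqType) (s : seq (A * V)) : exists E, subseq E s /\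
  lin_indep (map snd E) /\ (forall f, span_of (map snd s) f <-> span_of (map snd E) f).
Proof.
elim: s => [|p s [E [hs [hi hsp]]]].
  by exists [::]; split => //; split => //; exact: indep_nil.
case: (classic (span_of (map snd E) p.2)) => hp.
  exists E; split; first exact: (subseq_trans hs (subseq_cons s p)).
  split => // f; split.
    apply: span_trans => y /=; rewrite inE => /orP [/eqP -> //|/span_mem].
    by move/hsp.
  move/hsp; apply: span_sub => y hy /=; by rewrite inE hy orbT.
exists (p :: E); split; first by rewrite /= eqxx.
split; first by apply/indep_cons.
move=> f; split; apply: span_trans => y /=; rewrite inE => /orP [/eqP ->|hy].
- by apply: span_mem; rewrite inE eqxx.
- by move/span_mem/hsp: hy; apply: span_sub => z hz; rewrite inE hz orbT.
- by apply: span_mem; rewrite inE eqxx.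
- by move/span_mem/hsp: hy; apply: span_sub => z hz; rewrite inE hz orbT.
Qed.

Lemma indep_eq s (a b : 'I_(size s) -> K) : lin_indep s ->
  \sum_i a i *: s`_i = \sum_i b i *: s`_i -> forall i, a i = b i.
Proof.
move=> hi h i; apply/eqP; rewrite -subr_eq0; apply/eqP.
apply: (hi (fun i => a i - b i)).
under eq_bigr do rewrite scalerBl.
by rewrite sumrB h subrr.
Qed.

Lemma expand N M (t : 'I_N -> K) (S : 'I_N -> 'I_M -> K) (g : 'I_M -> V) :
  \sum_(k < N) t k *: (\sum_(l < M) S k l *: g l) =
  \sum_(l < M) (\sum_(k < N) t k * S k l) *: g l.
Proof.
under eq_bigr do rewrite scaler_sumr.
rewrite exchange_big; apply: eq_bigr => l _; rewrite scaler_suml.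
by apply: eq_bigr => k _; rewrite scalerA.
Qed.

Lemma chg (b e : seq V) : lin_indep b -> lin_indep e ->
  (forall k : 'I_(size b), span_of e b`_k) -> (forall l : 'I_(size e), span_of b e`_l) ->
  exists S : 'M[K]_(size b, size e), exists T : 'M[K]_(size e, size b),
  [/\ S *m T = 1%:M, T *m S = 1%:M,
      (forall k : 'I_(size b), b`_k = \sum_l S k l *: e`_l) &
      (forall l : 'I_(size e), e`_l = \sum_k T l k *: b`_k)].
Proof.
move=> ib ie hb he.
pose S := \matrix_(k, l) sval (constructive_indefinite_description _ (hb k)) l.
pose T := \matrix_(l, k) sval (constructive_indefinite_description _ (he l)) k.
have hS : forall k : 'I_(size b), b`_k = \sum_l S k l *: e`_l.
  move=> k; rewrite /S; under eq_bigr do rewrite mxE.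
  exact: (svalP (constructive_indefinite_description _ (hb k))).
have hT : forall l : 'I_(size e), e`_l = \sum_k T l k *: b`_k.
  move=> l; rewrite /T; under eq_bigr do rewrite mxE.
  exact: (svalP (constructive_indefinite_description _ (he l))).
exists S, T; split => //.
  apply/matrixP => k j.
  have := hS k; rewrite {1}onehot.
  under [X in _ = X -> _]eq_bigr do rewrite hT.
  rewrite expand => /indep_eq => /(_ ib j) h.
  by rewrite !mxE h; apply: eq_bigr => l _.
apply/matrixP => k j.
have := hT k; rewrite {1}onehot.
under [X in _ = X -> _]eq_bigr do rewrite hS.
rewrite expand => /indep_eq => /(_ ie j) h.
by rewrite !mxE h; apply: eq_bigr => l _.
Qed.

Lemma change_size (b e : seq V) : lin_indep b -> lin_indep e ->
  (forall k : 'I_(size b), span_of e b`_k) -> (forall l : 'I_(size e), span_of b e`_l) ->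
  (size b)%:R = (size e)%:R :> K.
Proof.
move=> ib ie hb he; have [S [T [h1 h2 _ _]]] := chg ib ie hb he.
by rewrite -!mxtrace1 -h1 -h2 mxtrace_mulC.
Qed.

Lemma lin_sum (L : V -> V) (I : Type) (r : seq I) (c : I -> K) (f : I -> V) :
  (forall a u v, L (a *: u + v) = a *: L u + L v) ->
  L (\sum_(i <- r) c i *: f i) = \sum_(i <- r) c i *: L (f i).
Proof.
move=> hL; have L0 : L 0 = 0.
  have := hL 1 0 0; rewrite scaler0 addr0 scale1r => h.
  by apply/esym/(addrI (L 0)); rewrite addr0.
elim: r => [|i r IH]; first by rewrite !big_nil.
by rewrite !big_cons hL IH.
Qed.

Lemma trace_change (b e : seq V) (L : V -> V) (A : 'M[K]_(size b))
  (d : 'I_(size e) -> K) :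
  (forall a u v, L (a *: u + v) = a *: L u + L v) ->
  lin_indep b -> lin_indep e ->
  (forall k : 'I_(size b), span_of e b`_k) -> (forall l : 'I_(size e), span_of b e`_l) ->
  (forall k : 'I_(size b), L b`_k = \sum_l A k l *: b`_l) ->
  (forall l : 'I_(size e), L e`_l = d l *: e`_l) ->
  \tr A = \sum_l d l.
Proof.
move=> hL ib ie hb he hA hd.
have [S [T [h1 h2 hS hT]]] := chg ib ie hb he.
have hA' : forall k j, A k j = \sum_l S k l * d l * T l j.
  move=> k j; have := hA k; rewrite {1}hS lin_sum //.
  under eq_bigr do rewrite hd scalerA hT.
  rewrite expand => /esym /indep_eq => /(_ ib j) ->.
  by apply: eq_bigr.
rewrite /mxtrace; under eq_bigr do rewrite hA'.
rewrite exchange_big; apply: eq_bigr => l _.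
have : (T *m S) l l = 1 by rewrite h2 mxE eqxx.
rewrite mxE => hl; rewrite -[RHS]mulr1 -hl mulr_sumr; apply: eq_bigr => k _.
by rewrite [S k l * d l]mulrC -mulrA [S k l * T l k]mulrC.
Qed.

End LA.
Lemma two_pow_inj0 (a b : nat) : (a != b)%N -> (2 : (Rdefinitions.R)[i]) ^+ a != 2 ^+ b.
Proof. move=> h. rewrite -!natrX eqr_nat eqn_exp2l //. Qed.
Lemma two_pow_inj (a b : nat) : (a != b)%N -> (2 : CC) ^+ a != 2 ^+ b.
Proof. exact: two_pow_inj0. Qed.
Lemma two_neq0_0 : (2 : (Rdefinitions.R)[i]) != 0.
Proof. by rewrite pnatr_eq0. Qed.
Lemma two_neq0 : (2 : CC) != 0.
Proof. exact: two_neq0_0. Qed.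

Section Van.
Variable n : nat.
Definition chi (m : 'X_{1..n}) (x : 'I_n -> CC) : CC := \prod_(i < n) x i ^+ m i.

Lemma chiM m x y : chi m (fun i => x i * y i) = chi m x * chi m y.
Proof. by rewrite /chi -big_split; apply: eq_bigr => i _; rewrite exprMn. Qed.

Lemma chi1 m : chi m (fun _ => 1) = 1.
Proof. by rewrite /chi big1 // => i _; rewrite expr1n. Qed.

Lemma sep (m1 m2 : 'X_{1..n}) : m1 != m2 ->
  exists y : 'I_n -> CC, (forall i, y i != 0) /\ chi m1 y != chi m2 y.
Proof.
move=> ne.
have [i hi] : exists i, m1 i != m2 i.
  apply/existsP; apply: contraR ne => /existsPn h; apply/eqP/mnmP => i.
  by apply/eqP; move: (h i); rewrite negbK.
exists (fun j => if j == i then 2 else 1); split.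
  by move=> j; case: (j == i); [exact: two_neq0|exact: oner_neq0].
have E m : chi m (fun j => if j == i then 2 else 1) = 2 ^+ m i.
  rewrite /chi (bigD1 i) //= eqxx big1 ?mulr1 // => j /negbTE ->.
  by rewrite expr1n.
by rewrite !E two_pow_inj.
Qed.

Lemma artin (s : seq 'X_{1..n}) (c : 'X_{1..n} -> CC) : uniq s ->
  (forall x : 'I_n -> CC, (forall i, x i != 0) -> \sum_(m <- s) c m * chi m x = 0) ->
  forall m, m \in s -> c m = 0.
Proof.
elim: s c => [|m1 s IH] c //= /andP [m1s us] h.
have hs : forall m, m \in s -> c m = 0.
  move=> m2 hm2; have ne : m1 != m2 by apply: contraNneq m1s => ->.
  have [y [y0 hy]] := sep _ _ ne.
  suff prem : forall x : 'I_n -> CC, (forall i, x i != 0) ->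
     \sum_(m <- s) c m * (chi m y - chi m1 y) * chi m x = 0.
    have := IH (fun m => c m * (chi m y - chi m1 y)) us prem m2 hm2.
    by move/eqP; rewrite mulf_eq0 subr_eq0 [chi m2 y == _]eq_sym (negbTE hy) orbF => /eqP.
  move=> x x0.
  have h1 := h (fun i => x i * y i) (fun i => mulf_neq0 (x0 i) (y0 i)).
  have h2 := h x x0.
  rewrite big_cons chiM in h1; rewrite big_cons in h2.
  have -> : \sum_(m <- s) c m * (chi m y - chi m1 y) * chi m x =
     \sum_(m <- s) c m * chi m (fun i => x i * y i) - chi m1 y * \sum_(m <- s) c m * chi m x.
    rewrite mulr_sumr -sumrB; apply: eq_bigr => m _; rewrite chiM; ring.
  move/eqP: h1; rewrite addrC addr_eq0 => /eqP ->.
  move/eqP: h2; rewrite addrC addr_eq0 => /eqP ->.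
  ring.
move=> m; rewrite inE => /orP [/eqP ->|/hs //].
have := h (fun _ => 1) (fun _ => oner_neq0 _); rewrite big_cons chi1 mulr1.
by rewrite big_seq big1 ?addr0 // => m' /hs ->; rewrite mul0r.
Qed.

Lemma vanish (p : {mpoly CC[n]}) :
  (forall x : 'I_n -> CC, (forall i, x i != 0) -> p.@[x] = 0) -> p = 0.
Proof.
move=> h; apply/mpolyP => m; rewrite mcoeff0.
case: (boolP (m \in msupp p)) => hm; last by rewrite memN_msupp_eq0.
apply: (@artin (msupp p) (fun m => p@_m) (msupp_uniq p) _ m hm) => x x0.
by rewrite -[RHS](h x x0) mevalE.
Qed.
End Van.
Lemma prod_nth (R : comRingType) (I : Type) (s : seq I) N (d : 'I_N -> I) (F : I -> R) :
  N = size s -> \prod_(k < N) F (nth (d k) s k) = \prod_(i <- s) F i.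
Proof.
elim: s N d => [|a s IH] N d hN; subst N => /=; first by rewrite big_ord0 big_nil.
rewrite big_ord_recl big_cons /=; congr (_ * _).
exact: (IH _ (fun k => d (lift ord0 k))).
Qed.

Lemma actB_lin n (b : 'M[CC]_n) a u v :
  actB b (a *: u + v) = a *: actB b u + actB b v.
Proof. by rewrite /actB /= comp_mpolyD comp_mpolyZ. Qed.

Section Scale.
Variable n : nat.
Variable x : 'I_n -> CC.
Hypothesis x0 : forall i, x i != 0.

Definition Zx : 'M[polyY n]_n := \matrix_(i, j) ((x i)%:MP * Ymx n i j).
Definition lqx := [tuple (mxvec Zx) 0 v | v < n * n].

Lemma inv_diag : invmx (diag_mx (\row_i (x i)^-1)) = diag_mx (\row_i x i).
Proof.
set b := diag_mx _.
have h : b *m diag_mx (\row_i x i) = 1%:M.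
  rewrite mulmx_diag -diag_const_mx; congr diag_mx; apply/rowP => i.
  by rewrite !mxE mulVf.
have [ub _] := mulmx1_unit h.
by rewrite -[RHS]mul1mx -(mulVmx ub) -mulmxA h mulmx1.
Qed.

Lemma actB_eq f : actB (diag_mx (\row_i (x i)^-1)) f = f \mPo lqx.
Proof.
rewrite /actB /= inv_diag; congr (f \mPo _); apply: eq_from_tnth => v.
rewrite !tnth_mktuple; congr (mxvec _ 0 v); apply/matrixP => i j; rewrite /Zx !mxE.
rewrite (bigD1 i) //= big1 ?addr0.
  by rewrite !mxE eqxx mulr1n.
by move=> k /negbTE nk; rewrite !mxE eq_sym nk mulr0n mpolyC0 mul0r.
Qed.

Lemma Ycomp i j : Ymx n i j \mPo lqx = (x i)%:MP * Ymx n i j.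
Proof.
rewrite {1}/Ymx mxE; case: ifP => h.
  by rewrite comp_mpolyXU -tnth_nth tnth_mktuple mxvecE /Zx mxE /Ymx mxE h.
by rewrite comp_mpoly0 mulr0.
Qed.

Lemma minor_comp (R S : {set 'I_n}) : #|R| = #|S| ->
  minorY R S \mPo lqx = (\prod_(i in R) (x i)%:MP) * minorY R S.
Proof.
move=> hRS; rewrite /minorY -det_map_mx.
set M := \matrix_(k, l) _.
have -> : map_mx (comp_mpoly lqx) M =
    diag_mx (\row_k (x (nth (enum_val k) (enum R) k))%:MP) *m M.
  apply/matrixP => k l; rewrite mul_diag_mx !mxE.
  have := Ycomp (nth (enum_val l) (enum R) k) (enum_val l).
  rewrite {1}/Ymx mxE => ->.
  congr (_%:MP * _); congr x; apply: set_nth_default.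
  by rewrite -cardE hRS ltn_ord.
rewrite det_mulmx det_diag; congr (_ * _).
under eq_bigr do rewrite mxE.
rewrite (@prod_nth _ _ (enum R) _ _ (fun i : 'I_n => (x i)%:MP)).
  by rewrite big_enum.
by rewrite -cardE hRS.
Qed.

Lemma genY_comp (C D : diagram n) : lediag C D ->
  genY C D \mPo lqx = (\prod_j \prod_(i in C j) (x i)%:MP) * genY C D.
Proof.
move=> h; rewrite /genY rmorph_prod -big_split /=; apply: eq_bigr => j _.
apply: minor_comp; move/forallP: h => /(_ j) /andP [/eqP -> _] //.
Qed.

Lemma act_genY (C D : diagram n) : lediag C D ->
  actB (diag_mx (\row_i (x i)^-1)) (genY C D) = (monoC C).@[x] *: genY C D.
Proof.
move=> h; rewrite actB_eq genY_comp // -mul_mpolyC; congr (_ * _).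
rewrite /monoC !rmorph_prod; apply: eq_bigr => j _.
rewrite !rmorph_prod; apply: eq_bigr => i _.
by rewrite /= mevalXU.
Qed.
End Scale.

Definition Lx n (x : 'I_n -> CC) := actB (diag_mx (\row_i (x i)^-1)).

Lemma Lx_scale n (x : 'I_n -> CC) (x0 : forall i, x i != 0) a u :
  Lx x (a *: u) = a *: Lx x u.
Proof. by rewrite /Lx !actB_eq // comp_mpolyZ. Qed.

Lemma monoC_X n (C : diagram n) : exists e, monoC C = 'X_[e].
Proof.
rewrite /monoC; apply: (big_ind (fun p => exists e, p = 'X_[e])).
- by exists 0%MM; rewrite mpolyX0.
- by move=> _ _ [a ->] [b ->]; exists (a + b)%MM; rewrite mpolyXD.
move=> j _; apply: (big_ind (fun p => exists e, p = 'X_[e])).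
- by exists 0%MM; rewrite mpolyX0.
- by move=> _ _ [a ->] [b ->]; exists (a + b)%MM; rewrite mpolyXD.
by move=> i _; exists U_(i)%MM.
Qed.

Lemma eqX n (a b : 'X_{1..n}) : ('X_[a] == 'X_[b] :> {mpoly CC[n]}) = (a == b).
Proof.
apply/eqP/eqP => [h|-> //].
by rewrite -(@mleadXm n CC a) h mleadXm.
Qed.

Lemma group n (I : Type) (r : seq I) (w : I -> {mpoly CC[n]}) (f : I -> polyY n)
  (m0 : {mpoly CC[n]}) e0 :
  m0 = 'X_[e0] ->
  (forall i, exists e, w i = 'X_[e]) ->
  (forall i x, (forall k, x k != 0) -> Lx x (f i) = (w i).@[x] *: f i) ->
  \sum_(i <- r) f i = 0 -> \sum_(i <- r | w i == m0) f i = 0.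
Proof.
move=> hm0 hmono hwt hsum; apply/mpolyP => mu; rewrite mcoeff0.
have key : forall x : 'I_n -> CC, (forall k, x k != 0) ->
    (\sum_(i <- r) (f i)@_mu *: w i).@[x] = 0.
  move=> x x0.
  have : (\sum_(i <- r) f i) \mPo lqx x = 0 by rewrite hsum comp_mpoly0.
  rewrite raddf_sum.
  under eq_bigr do rewrite /= -actB_eq // -/(Lx x) hwt //.
  move/(congr1 (mcoeff mu)); rewrite raddf_sum mcoeff0 => h.
  rewrite rmorph_sum /= -[RHS]h; apply: eq_bigr => i _.
  by rewrite /= mevalZ mcoeffZ mulrC.
have h0 := congr1 (mcoeff e0) (vanish key).
rewrite raddf_sum mcoeff0 in h0; rewrite raddf_sum big_mkcond -[RHS]h0 /=.
apply: eq_bigr => i _; rewrite mcoeffZ.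
have [e he] := hmono i; rewrite he hm0 mcoeffX eqX.
by case: (e == e0); rewrite ?mulr1 ?mulr0 ?mcoeff0.
Qed.

Theorem corollary5p5 (n : nat) (D C1 : diagram n) :
  lediag C1 D ->
  let m := monoC C1 in
  let Cs := [seq C <- diagrams_le D | monoC C == m] in
  let W := span_of [seq genY C D | C <- Cs] in
  (exists P, is_dual_char (weylM D) P) /\
  (exists d, has_dim W d) /\
  (forall (P : {mpoly CC[n]}) (d : nat),
     is_dual_char (weylM D) P -> has_dim W d -> coef_mon P m = d%:R).
Proof.
move=> hC1 m Cs W.
set ps := [seq (monoC C, genY C D) | C <- diagrams_le D].
have hG : map snd ps = [seq genY C D | C <- diagrams_le D] by rewrite /ps -map_comp.
have hps : forall p, p \in ps -> exists C, [/\ C \in diagrams_le D, lediag C D &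
    p = (monoC C, genY C D)].
  move=> p /mapP [C hC ->]; exists C; split => //.
  by move: hC; rewrite mem_filter => /andP [].
have hwt : forall p, p \in ps -> forall x : 'I_n -> CC, (forall i, x i != 0) ->
    Lx x p.2 = p.1.@[x] *: p.2.
  by move=> p /hps [C [_ hC ->]] x x0 /=; apply: act_genY.
have hmono : forall p, p \in ps -> exists e, p.1 = 'X_[e].
  by move=> p /hps [C [_ _ ->]]; apply: monoC_X.
have [E [hsub [hind hspan]]] := @extract _ _ _ ps.
set eb := map snd E.
have hE : forall p, p \in E -> p \in ps := mem_subseq hsub.
have span_eb : forall f, weylM D f <-> span_of eb f.
  by move=> f; rewrite /weylM -hG; exact: hspan.
pose p0 : {mpoly CC[n]} * polyY n := (0, 0).
have szE : size eb = size E by rewrite size_map.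
have nthE : forall l : 'I_(size eb), nth p0 E l \in ps.
  by move=> l; apply: hE; apply: mem_nth; rewrite -szE.
have ebE : forall l : 'I_(size eb), eb`_l = (nth p0 E l).2.
  by move=> l; rewrite (nth_map p0) // -szE.
have hdiag : forall x : 'I_n -> CC, (forall i, x i != 0) ->
    forall l : 'I_(size eb), Lx x eb`_l = (nth p0 E l).1.@[x] *: eb`_l.
  by move=> x x0 l; rewrite ebE; apply: hwt.
pose P := \sum_(p <- E) p.1.
have Ptr : forall x : 'I_n -> CC,
    P.@[x] = \sum_(l < size eb) (nth p0 E l).1.@[x].
  move=> x; rewrite /P rmorph_sum (big_nth p0) big_mkord szE.
  by apply: eq_bigr.
have charP : is_dual_char (weylM D) P.
  move=> x x0; exists eb; split; first by split.
  exists (diag_mx (\row_l (nth p0 E l).1.@[x])); split.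
    move=> k; rewrite -/(Lx x) hdiag // (bigD1 k) //= big1 ?addr0.
      by rewrite !mxE eqxx mulr1n.
    by move=> l /negbTE; rewrite !mxE eq_sym => ->; rewrite mulr0n scale0r.
  by rewrite mxtrace_diag Ptr; apply: eq_bigr => l _; rewrite mxE.
set eW := map snd (filter (fun p => p.1 == m) E).
have indW : lin_indep eW.
  exact: (indep_subseq eW (map_subseq snd (filter_subseq _ E)) hind).
have spanW : forall f, W f <-> span_of eW f.
  move=> f; split.
    apply: span_trans => y /mapP [C hC ->].
    move: hC; rewrite mem_filter => /andP [/eqP hCm hC].
    have hCD : lediag C D by move: hC; rewrite mem_filter => /andP [].
    have : span_of eb (genY C D).
      by apply/span_eb; apply: span_mem; apply: map_f.
    move=> [c hc].
    pose r := None :: map Some (index_enum 'I_(size eb)).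
    pose w (o : option 'I_(size eb)) := if o is Some k then (nth p0 E k).1 else m.
    pose g (o : option 'I_(size eb)) := if o is Some k then (- c k) *: eb`_k else genY C D.
    have [e0 he0] := monoC_X C1.
    have hm : forall i, exists e, w i = 'X_[e].
      by case => [k|] /=; [apply: hmono (nthE k) | exact: (monoC_X C1)].
    have hw : forall i (x : 'I_n -> CC), (forall k, x k != 0) ->
        Lx x (g i) = (w i).@[x] *: g i.
      case => [k|] x x0 /=.
        by rewrite Lx_scale // hdiag // !scalerA mulrC.
      by rewrite -hCm; apply: act_genY.
    have hs : \sum_(i <- r) g i = 0.
      rewrite big_cons big_map /=; under eq_bigr do rewrite scaleNr.
      by rewrite sumrN hc subrr.
    have := @group n _ r w g m e0 he0 hm hw hs.
    rewrite /r big_cons /= eqxx big_map => h.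
    have -> : genY C D = \sum_(j < size eb | (nth p0 E j).1 == m) c j *: eb`_j.
      move/eqP: h; rewrite addr_eq0 => /eqP ->; rewrite -sumrN.
      by rewrite /w /g /=; apply: eq_bigr => j _; rewrite scaleNr opprK.
    apply: span_sum => j hj; apply: spanZ; apply: span_mem; rewrite ebE.
    by apply: map_f; rewrite mem_filter hj mem_nth // -szE.
  apply: span_sub => y /mapP [p]; rewrite mem_filter => /andP [/eqP hpm hpE] ->.
  have [C [hC _ hp]] := hps p (hE p hpE).
  apply/mapP; exists C => //; last by rewrite hp.
  by rewrite mem_filter hC andbT -hpm hp.
split; first by exists P.
split; first by exists (size eW); exists eW; split => //; split.
move=> P' d hP' [b [hb [indb spanb]]].
have PP : P' = P.
  apply/eqP; rewrite -subr_eq0; apply/eqP; apply: vanish => x x0.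
  rewrite mevalB; apply/eqP; rewrite subr_eq0; apply/eqP.
  have [b' [[ib' sb'] [A [hA ->]]]] := hP' x x0.
  rewrite Ptr.
  apply: (@trace_change _ _ b' eb (Lx x) A (fun l => (nth p0 E l).1.@[x])) => //.
  - exact: actB_lin.
  - by move=> k; apply/span_eb/sb'; apply: span_mem; apply: mem_nth.
  - by move=> l; apply/sb'/span_eb; apply: span_mem; apply: mem_nth.
  - by move=> l; apply: hdiag.
rewrite PP /coef_mon /P raddf_sum /=.
have [e0 he0] := monoC_X C1.
have -> : \sum_(p <- E) p.1@_(mlead m) = \sum_(p <- E) ((p.1 == m) : nat)%:R.
  rewrite big_seq [RHS]big_seq; apply: eq_bigr => p /hE /hmono [e he].
  by rewrite he /m he0 mleadXm mcoeffX eqX.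
have cnt : forall (s : seq ({mpoly CC[n]} * polyY n)),
    (\sum_(p <- s) ((p.1 == m) : nat))%N = count (fun p => p.1 == m) s.
  by elim => [|a s IH]; rewrite ?big_nil ?big_cons ?IH.
rewrite -natr_sum cnt -size_filter -(size_map snd) -/eW -hb.
apply: (change_size indW indb).
  by move=> k; apply/spanb/spanW; apply: span_mem; apply: mem_nth.
by move=> l; apply/spanW/spanb; apply: span_mem; apply: mem_nth.
Qed.
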